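(* Let $a,y\in\mathbb{R}$ and define $$\mathcal{K}(a;x,y,z)=2\exp(2xyz)\,\mathrm{Ai}\big(x^2+y^2+z^2+a/4\big).$$ For each $n=0,1,2,\ldots$ and $\rho\in(0,1)$ there exists a constant $C=C_n(\rho,a,y)>0$ such that $$\Big|\frac{\partial^n\mathcal{K}(a;x,y,z)}{\partial x^n}\Big|<C\exp\Big(-\frac{2\rho}{3}(x^2+z^2)^{3/2}\Big)$$ for all $x,z\in\mathbb{R}$.
   Context: $\mathrm{Ai}$ is the standard Airy function, $\mathrm{Ai}(x)=\frac{1}{2\pi i}\int_{\infty e^{-i\pi/3}}^{\infty e^{i\pi/3}}\exp(\zeta^3/3-\zeta x)\,d\zeta$, the solution of $w''=xw$ decaying as $x\to+\infty$. *)

(* Defs.v *)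
From Stdlib Require Import Reals.
From Coquelicot Require Import Coquelicot.
Open Scope R_scope.

(* Airy function Ai, defined by the contour integral
     Ai(x) = 1/(2 pi i) \int_{oo e^{-i pi/3}}^{oo e^{i pi/3}} exp(z^3/3 - z x) dz
   with the contour parametrized as the two rays z = r e^{-i pi/3} (r: oo -> 0)
   and z = r e^{i pi/3} (r: 0 -> oo).  On both rays z^3 = -r^3, and the two
   contributions are complex conjugates, so the integral equals
     (1/pi) \int_0^oo exp(-r^3/3 - x r/2) sin(pi/3 - sqrt 3 x r / 2) dr,
   an absolutely convergent real improper integral. *)
Definition Ai (x : R) : R :=
  / PI * RInt_gen
    (fun r : R => exp (- (r ^ 3) / 3 - x * r / 2) * sin (PI / 3 - sqrt 3 * x * r / 2))
    (at_point 0) (Rbar_locally p_infty).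

Definition Kker (a x y z : R) : R :=
  2 * exp (2 * x * y * z) * Ai (x ^ 2 + y ^ 2 + z ^ 2 + a / 4).

(* Main.v *)
Require Import Defs.
From Stdlib Require Import FunctionalExtensionality.
From Stdlib Require Import Reals Lra Lia Psatz.
From Coquelicot Require Import Coquelicot.
Open Scope R_scope.

Lemma exp_le x y : x <= y -> exp x <= exp y.
Proof. intro H. destruct H as [H|H]. left; apply exp_increasing; auto. subst; lra. Qed.

Notation F0 := (at_point 0).
Notation FI := (Rbar_locally p_infty).

Lemma exp_m_inv r : 0 <= r -> exp (-r) <= / (1 + r).
Proof.
  intro Hr. pose proof (exp_ineq1_le r).
  rewrite exp_Ropp. apply Rinv_le_contravar; lra.
Qed.

Lemma lim_exp_bound (f : R -> R) M : (forall r, 0 <= r -> Rabs (f r) <= M * exp (-r)) ->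
  filterlim f FI (locally 0).
Proof.
  intro Hf. apply filterlim_locally. intro eps.
  exists (Rabs M / eps). intros r Hr.
  change (Rabs (f r - 0) < eps). rewrite Rminus_0_r.
  assert (He := cond_pos eps).
  assert (0 <= Rabs M / eps) by (apply Rmult_le_pos; [apply Rabs_pos| left; apply Rinv_0_lt_compat; lra]).
  assert (Hr0 : 0 <= r) by lra.
  eapply Rle_lt_trans. apply Hf; auto.
  eapply Rle_lt_trans. apply Rmult_le_compat_r. left; apply exp_pos. apply Rle_abs.
  eapply Rle_lt_trans. apply Rmult_le_compat_l. apply Rabs_pos. apply exp_m_inv; auto.
  apply Rmult_lt_reg_r with (1 + r). lra.
  rewrite Rmult_assoc, Rinv_l by lra. rewrite Rmult_1_r.
  assert (Rabs M < eps * r).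
  { unfold Rdiv in Hr. apply Rmult_lt_compat_r with (r := eps) in Hr; auto.
    rewrite Rmult_assoc, Rinv_l in Hr by lra. lra. }
  nra.
Qed.

Lemma exp_m_is_RInt M a b : is_RInt (fun r => M * exp (- r)) a b (M * (exp (-a) - exp (-b))).
Proof.
  replace (M * (exp (-a) - exp (-b))) with (minus ((fun r => - M * exp (-r)) b) ((fun r => - M * exp (-r)) a))
    by (unfold minus, plus, opp; simpl; ring).
  apply (@is_RInt_derive R_CompleteNormedModule (fun r => - M * exp (-r)) (fun r => M * exp (-r))).
  - intros x _. auto_derive. auto. ring.
  - intros x _. apply (ex_derive_continuous (V:=R_NormedModule)). auto_derive. auto.
Qed.

Lemma exp_m_int M : is_RInt_gen (fun r => M * exp (- r)) F0 FI M.
Proof.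
  set (f := fun r => - M * exp (-r)).
  assert (HD : forall x, Derive f x = M * exp (-x)).
  { intro x. apply is_derive_unique. unfold f. auto_derive. auto. ring. }
  apply is_RInt_gen_ext with (Derive f).
  { apply filter_forall. intros ab x _. apply HD. }
  replace M with (0 - f 0) by (unfold f; rewrite Ropp_0, exp_0; ring).
  apply is_RInt_gen_Derive.
  - apply filter_forall. intros ab x _. unfold f. auto_derive. auto.
  - apply filter_forall. intros ab x _.
    apply continuous_ext with (fun x => M * exp (-x)). intro; symmetry; apply HD.
    apply (ex_derive_continuous (V:=R_NormedModule)). auto_derive. auto.
  - intros P HP. unfold filtermap, at_point. apply locally_singleton. exact HP.
  - apply lim_exp_bound with (Rabs M). intros r _. unfold f.
    rewrite Rabs_mult, Rabs_Ropp, (Rabs_right (exp _)). lra. left; apply exp_pos.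
Qed.

Lemma RI_exist (f : R -> R) M : (forall r, continuous f r) ->
  (forall r, 0 <= r -> Rabs (f r) <= M * exp (-r)) -> ex_RInt_gen f F0 FI.
Proof.
  intros Hc Hf.
  assert (Hex : forall a b, ex_RInt f a b).
  { intros a b. apply (ex_RInt_continuous (V:=R_CompleteNormedModule)). intros; apply Hc. }
  assert (HM : 0 <= M).
  { specialize (Hf 0 (Rle_refl 0)). pose proof (Rabs_pos (f 0)).
    rewrite Ropp_0, exp_0 in Hf. lra. }
  unfold ex_RInt_gen, is_RInt_gen.
  assert (Hu : filter_prod F0 FI (fun x : R * R =>
     (exists y : R, is_RInt f (fst x) (snd x) y) /\
     (forall y1 y2 : R, is_RInt f (fst x) (snd x) y1 -> is_RInt f (fst x) (snd x) y2 -> y1 = y2))).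
  { apply filter_forall. intros [a b]. split.
    + exists (RInt f a b). apply (RInt_correct (V:=R_CompleteNormedModule)). apply Hex.
    + intros y1 y2 H1 H2. rewrite <- (is_RInt_unique (V:=R_CompleteNormedModule) _ _ _ _ H1).
      apply (is_RInt_unique (V:=R_CompleteNormedModule)); auto. }
  apply (proj1 (filterlimi_locally_cauchy (U:=R_CompleteSpace) (F := filter_prod F0 FI) _ Hu)).
  - intro eps. assert (He := cond_pos eps).
    exists (fun ab => fst ab = 0 /\ fst ab <= snd ab /\ M / eps < snd ab). split.
    + apply Filter_prod with (fun x => x = 0) (fun y => Rmax 0 (M / eps) < y).
      * reflexivity.
      * exists (Rmax 0 (M / eps)). auto.
      * intros x y Hx Hy. simpl. pose proof (Rmax_l 0 (M/eps)). pose proof (Rmax_r 0 (M/eps)). lra.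
    + intros [a1 b1] [a2 b2] [Ha1 [Hab1 Hb1]] [Ha2 [Hab2 Hb2]] u' v' Hu1 Hv.
      simpl in *. subst a1 a2.
      change (Rabs (v' - u') < eps).
      assert (Key : forall p q, 0 <= p <= q -> M / eps < p ->
                 Rabs (RInt f 0 q - RInt f 0 p) < eps).
      { intros p q Hpq Hp.
        assert (E : RInt f 0 q = RInt f 0 p + RInt f p q).
        { rewrite <- (RInt_Chasles (V:=R_CompleteNormedModule) f 0 p q) by apply Hex. reflexivity. }
        assert (E' : forall A B : R, A + B - A = B) by (intros; ring). rewrite E, E'.
        apply Rle_lt_trans with (M * (exp (-p) - exp (-q))).
        - change (norm (RInt f p q) <= M * (exp (- p) - exp (- q))).
          apply (norm_RInt_le (V:=R_NormedModule) f (fun r => M * exp (-r)) p q _ (M * (exp (-p) - exp (-q)))).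
          + lra.
          + intros x Hx. apply Hf. lra.
          + apply (RInt_correct (V:=R_CompleteNormedModule)), Hex.
          + apply exp_m_is_RInt.
        - assert (exp (-q) > 0) by apply exp_pos.
          assert (M * exp (-p) < eps).
          { assert (Hq : exp (-p) <= / (1 + p)) by (apply exp_m_inv; lra).
            apply Rle_lt_trans with (M * / (1 + p)).
            apply Rmult_le_compat_l; lra.
            apply Rmult_lt_reg_r with (1 + p). lra.
            rewrite Rmult_assoc, Rinv_l by lra. rewrite Rmult_1_r.
            assert (M < eps * p).
            { unfold Rdiv in Hp. apply Rmult_lt_compat_r with (r := eps) in Hp; auto.
              rewrite Rmult_assoc, Rinv_l in Hp by lra. lra. }
            nra. }
          nra. }
      rewrite <- (is_RInt_unique _ _ _ _ Hu1), <- (is_RInt_unique _ _ _ _ Hv).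
      destruct (Rle_dec b1 b2).
      * apply Key; try lra.
      * rewrite Rabs_minus_sym. apply Key; lra.
Qed.

Lemma RI_bound (f : R -> R) M : (forall r, continuous f r) ->
  (forall r, 0 <= r -> Rabs (f r) <= M * exp (-r)) -> Rabs (RInt_gen f F0 FI) <= M.
Proof.
  intros Hc Hf.
  change (norm (RInt_gen f F0 FI) <= M).
  apply (@RInt_gen_norm R_CompleteNormedModule F0 FI _ _ f (fun r => M * exp (-r))).
  - apply Filter_prod with (fun x => x = 0) (fun y => 0 < y).
    + reflexivity.
    + exists 0. auto.
    + intros x y -> Hy. simpl. lra.
  - apply Filter_prod with (fun x => x = 0) (fun y => 0 < y).
    + reflexivity.
    + exists 0. auto.
    + intros x y -> Hy. simpl. intros t Ht. apply Hf. lra.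
  - apply (RInt_gen_correct (V:=R_CompleteNormedModule)). apply (RI_exist f M Hc Hf).
  - apply exp_m_int.
Qed.
Lemma is_derive_cont_pt (f : R -> R) x l : is_derive f x l -> continuity_pt f x.
Proof.
  intro H. apply is_derive_Reals in H.
  apply derivable_continuous_pt. exists l. exact H.
Qed.

Lemma mvt_bound (f df : R -> R) a b K : (forall t, is_derive f t (df t)) ->
  (forall t, Rmin a b <= t <= Rmax a b -> Rabs (df t) <= K) ->
  Rabs (f b - f a) <= K * Rabs (b - a).
Proof.
  intros Hd Hb.
  destruct (MVT_gen f a b df) as [c [Hc E]].
  - intros; apply Hd.
  - intros; eapply is_derive_cont_pt; apply Hd.
  - rewrite E, Rabs_mult. apply Rmult_le_compat_r. apply Rabs_pos. apply Hb. exact Hc.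
Qed.

Lemma taylor2 (f f1 f2 : R -> R) s h K : (forall t, is_derive f t (f1 t)) ->
  (forall t, is_derive f1 t (f2 t)) ->
  (forall t, Rmin s (s+h) <= t <= Rmax s (s+h) -> Rabs (f2 t) <= K) ->
  Rabs (f (s+h) - f s - h * f1 s) <= K * h^2.
Proof.
  intros H1 H2 HK.
  assert (HK0 : 0 <= K).
  { specialize (HK s). assert (Rmin s (s+h) <= s <= Rmax s (s+h)).
    { split; [apply Rmin_l | apply Rmax_l]. }
    pose proof (Rabs_pos (f2 s)). specialize (HK H). lra. }
  assert (Hf1 : forall t, Rmin s (s+h) <= t <= Rmax s (s+h) -> Rabs (f1 t - f1 s) <= K * Rabs h).
  { intros t Ht.
    apply Rle_trans with (K * Rabs (t - s)).
    apply mvt_bound with f2; auto.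
    intros u Hu. apply HK.
    unfold Rmin, Rmax in *. destruct (Rle_dec s (s+h)), (Rle_dec s t); lra.
    apply Rmult_le_compat_l; auto.
    unfold Rmin, Rmax in *. destruct (Rle_dec s (s+h)); 
      repeat (rewrite Rabs_right by lra) || (rewrite Rabs_left1 by lra) ; try lra;
      unfold Rabs; repeat destruct Rcase_abs; lra. }
  set (phi := fun t => f t - t * f1 s).
  replace (f (s+h) - f s - h * f1 s) with (phi (s+h) - phi s) by (unfold phi; ring).
  replace (K * h^2) with ((K * Rabs h) * Rabs (s + h - s)).
  2: { replace (s + h - s) with h by ring. rewrite Rmult_assoc, <- Rabs_mult, Rabs_right. ring.
       apply Rle_ge. nra. }
  apply mvt_bound with (fun t => f1 t - f1 s).
  - intro t. unfold phi.
    assert (Hl : is_derive (fun t => t * f1 s) t (f1 s)) by (auto_derive; auto; ring).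
    exact (is_derive_minus f (fun t => t * f1 s) t _ _ (H1 t) Hl).
  - exact Hf1.
Qed.

Lemma param_deriv (g g1 g2 : R -> R -> R) s0 M :
  (forall s r, is_derive (fun s => g s r) s (g1 s r)) ->
  (forall s r, is_derive (fun s => g1 s r) s (g2 s r)) ->
  (forall s r, continuous (g s) r) -> (forall s r, continuous (g1 s) r) ->
  (forall s r, Rabs (s - s0) <= 1 -> 0 <= r -> Rabs (g s r) <= M * exp (-r) /\
       Rabs (g1 s r) <= M * exp (-r) /\ Rabs (g2 s r) <= M * exp (-r)) ->
  is_derive (fun s => RInt_gen (g s) F0 FI) s0 (RInt_gen (g1 s0) F0 FI).
Proof.
  intros Hd1 Hd2 Hc Hc1 Hb.
  assert (HM : 0 <= M).
  { destruct (Hb s0 0) as [H _]. rewrite Rminus_diag, Rabs_R0; lra. lra.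
    rewrite Ropp_0, exp_0 in H. pose proof (Rabs_pos (g s0 0)). lra. }
  assert (Hex : forall s, Rabs (s - s0) <= 1 -> ex_RInt_gen (g s) F0 FI).
  { intros s Hs. apply (RI_exist _ M (Hc s)). intros r Hr. apply (Hb s r Hs Hr). }
  assert (Hex1 : ex_RInt_gen (g1 s0) F0 FI).
  { apply (RI_exist _ M (Hc1 s0)). intros r Hr. apply (Hb s0 r). rewrite Rminus_diag, Rabs_R0; lra. exact Hr. }
  apply is_derive_Reals. intros eps Heps.
  assert (Hd : 0 < Rmin 1 (eps / (M + 1))).
  { apply Rmin_pos. lra. apply Rdiv_lt_0_compat; lra. }
  exists (mkposreal _ Hd). intros h Hh0 Hh. simpl in Hh.
  assert (Hh1 : Rabs h <= 1) by (pose proof (Rmin_l 1 (eps / (M+1))); lra).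
  assert (Hh2 : Rabs h < eps / (M + 1)) by (pose proof (Rmin_r 1 (eps / (M+1))); lra).
  set (D := fun r => g (s0 + h) r - g s0 r - h * g1 s0 r).
  assert (HD : is_RInt_gen D F0 FI (RInt_gen (g (s0+h)) F0 FI - RInt_gen (g s0) F0 FI - h * RInt_gen (g1 s0) F0 FI)).
  { apply (is_RInt_gen_minus (V:=R_NormedModule)).
    apply (is_RInt_gen_minus (V:=R_NormedModule)).
    apply (RInt_gen_correct (V:=R_CompleteNormedModule)). apply Hex. replace (s0 + h - s0) with h by ring. auto.
    apply (RInt_gen_correct (V:=R_CompleteNormedModule)). apply Hex. rewrite Rminus_diag, Rabs_R0; lra.
    apply (is_RInt_gen_scal (V:=R_NormedModule)).
    apply (RInt_gen_correct (V:=R_CompleteNormedModule)). apply Hex1. }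
  assert (HDb : Rabs (RInt_gen D F0 FI) <= M * h^2).
  { apply RI_bound.
    - intro r. unfold D.
      apply (continuous_minus (V:=R_NormedModule)).
      apply (continuous_minus (V:=R_NormedModule)). apply Hc. apply Hc.
      apply (continuous_scal (V:=R_NormedModule) (fun _ => h) (g1 s0)). apply continuous_const. apply Hc1.
    - intros r Hr. unfold D.
      replace (M * h^2 * exp (-r)) with ((M * exp (-r)) * h^2) by ring.
      apply (taylor2 (fun s => g s r) (fun s => g1 s r) (fun s => g2 s r)); auto.
      intros t Ht. apply (Hb t r); auto.
      unfold Rmin, Rmax in Ht. destruct (Rle_dec s0 (s0+h)); unfold Rabs in *;
        repeat destruct Rcase_abs; lra. }
  rewrite (is_RInt_gen_unique _ _ HD) in HDb.
  replace ((RInt_gen (g (s0 + h)) F0 FI - RInt_gen (g s0) F0 FI) / h - RInt_gen (g1 s0) F0 FI)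
    with ((RInt_gen (g (s0+h)) F0 FI - RInt_gen (g s0) F0 FI - h * RInt_gen (g1 s0) F0 FI) / h)
    by (field; auto).
  unfold Rdiv. rewrite Rabs_mult, Rabs_inv.
  assert (0 < Rabs h) by (apply Rabs_pos_lt; auto).
  apply Rle_lt_trans with (M * h^2 * / Rabs h).
  apply Rmult_le_compat_r. left; apply Rinv_0_lt_compat; auto. exact HDb.
  replace (M * h^2 * / Rabs h) with (M * Rabs h).
  2: { rewrite <- (pow2_abs h). field. lra. }
  apply Rle_lt_trans with (M * (eps / (M+1))).
  apply Rmult_le_compat_l; lra.
  unfold Rdiv. rewrite <- Rmult_assoc. apply Rmult_lt_reg_r with (M+1). lra.
  rewrite Rmult_assoc, Rinv_l by lra. nra.
Qed.
Lemma pow1r_le_exp k r : 0 <= r -> (1 + r)^k <= exp (INR k * r).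
Proof.
  intro Hr. induction k as [|k IH].
  - simpl. rewrite Rmult_0_l, exp_0. lra.
  - rewrite S_INR. replace ((INR k + 1) * r) with (INR k * r + r) by ring.
    rewrite exp_plus. simpl. rewrite Rmult_comm.
    apply Rmult_le_compat; try lra.
    + apply pow_le; lra.
    + pose proof (exp_ineq1_le r). lra.
Qed.

Lemma cubic_bound A B : 0 <= A -> 0 <= B -> exists T0, forall r, 0 <= r ->
  - r^3/3 + A * r^2 + B * r <= T0.
Proof.
  intros HA HB. set (T := 3*A + 3*B + 1).
  exists (A * T^2 + B * T). intros r Hr.
  destruct (Rle_dec r T) as [H|H].
  - assert (r^2 <= T^2) by (apply pow_incr; lra).
    assert (0 <= r^3) by (apply pow_le; lra).
    assert (A * r^2 <= A*T^2) by (apply Rmult_le_compat_l; lra).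
    assert (B * r <= B * T) by (apply Rmult_le_compat_l; lra).
    lra.
  - assert (Hr1 : 1 <= r) by (unfold T in H; lra).
    assert (r^3/3 >= A * r^2 + B * r).
    { assert (r * r >= T * r) by (apply Rle_ge, Rmult_le_compat_r; lra).
      assert (r*r >= r) by nra.
      unfold T in *. simpl. nra. }
    assert (0 <= A * T^2 + B*T).
    { assert (0 <= T) by (unfold T; lra). 
      apply Rplus_le_le_0_compat; apply Rmult_le_pos; try apply pow_le; lra. }
    lra.
Qed.

Lemma exp_poly_bound k A B D : 0 <= A -> 0 <= B -> exists M, 0 < M /\
  forall r, 0 <= r -> (1+r)^k * exp (- r^3/3 + A * r^2 + B * r + D) <= M * exp (- r).
Proof.
  intros HA HB.
  assert (HB' : 0 <= B + INR k + 1) by (pose proof (pos_INR k); lra).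
  destruct (cubic_bound A (B + INR k + 1) HA HB') as [T0 HT].
  exists (exp (T0 + D)). split; [apply exp_pos|].
  intros r Hr.
  apply Rle_trans with (exp (INR k * r) * exp (- r^3/3 + A * r^2 + B * r + D)).
  - apply Rmult_le_compat_r. left; apply exp_pos. apply pow1r_le_exp; auto.
  - rewrite <- !exp_plus. apply exp_le.
    specialize (HT r Hr). lra.
Qed.
Lemma sinP3 x : sin (x + PI/3) = sin x * (1/2) + cos x * (sqrt 3 / 2).
Proof. rewrite sin_plus, sin_PI3, cos_PI3. ring. Qed.
Definition g (k:nat) (s r : R) := (-r)^k * exp(-(r^3)/3 - s*r/2) * sin((INR k + 1) * (PI/3) - sqrt 3 * s * r / 2).
Lemma g_der k s r : is_derive (fun s => g k s r) s (g (S k) s r).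
Proof. unfold g. auto_derive. auto. rewrite S_INR.
replace ((INR k + 1 + 1) * (PI / 3) - sqrt 3 * s * r / 2) with (((INR k + 1) * (PI / 3) - sqrt 3 * s * r / 2) + PI/3) by ring.
rewrite sinP3.
replace ((INR k + 1) * (PI / 3) + - (sqrt 3 * s * r * / 2)) with ((INR k + 1) * (PI / 3) - sqrt 3 * s * r / 2) by (unfold Rdiv; ring).
replace (- (r * (r * (r * 1))) / 3 + - (s * r * / 2)) with (- r ^ 3 / 3 - s * r / 2) by (unfold Rdiv; ring).
match goal with |- ?a = ?b => change (@eq R a b) end. rewrite <- tech_pow_Rmult. change ((-r)^S k) with (-r * (-r)^k). set (t := (-r)^k). unfold Rdiv. ring. Qed.
Lemma g_cont k s r : continuous (g k s) r.
Proof. apply (ex_derive_continuous (V:=R_NormedModule) (g k s)). unfold g. auto_derive. auto. Qed.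

Lemma g_bound k s0 : exists M, 0 < M /\ forall s r, Rabs (s - s0) <= 1 -> 0 <= r ->
  Rabs (g k s r) <= M * exp (-r).
Proof.
  assert (HB : 0 <= (Rabs s0 + 1) / 2) by (pose proof (Rabs_pos s0); lra).
  destruct (exp_poly_bound k 0 ((Rabs s0 + 1)/2) 0 (Rle_refl 0) HB) as [M [HM H]].
  exists M. split; auto. intros s r Hs Hr.
  eapply Rle_trans; [|apply (H r Hr)].
  unfold g. rewrite !Rabs_mult.
  rewrite (Rabs_right (exp _)) by (left; apply exp_pos).
  apply Rle_trans with (Rabs ((-r)^k) * exp (- r ^ 3 / 3 - s * r / 2) * 1).
  { apply Rmult_le_compat_l. apply Rmult_le_pos. apply Rabs_pos. left; apply exp_pos. apply Rabs_le_1 || apply SIN_bound || idtac.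
    pose proof (SIN_bound ((INR k + 1) * (PI / 3) - sqrt 3 * s * r / 2)). unfold Rabs; destruct Rcase_abs; lra. }
  rewrite Rmult_1_r. apply Rmult_le_compat.
  - apply Rabs_pos.
  - left; apply exp_pos.
  - rewrite <- RPow_abs, Rabs_Ropp. apply pow_incr. split. apply Rabs_pos. rewrite Rabs_right; lra.
  - apply exp_le. 
    assert (- s * r <= (Rabs s0 + 1) * r).
    { apply Rmult_le_compat_r with (r:=r) in Hs; auto.
      unfold Rabs in *. repeat destruct Rcase_abs; nra. }
    lra.
Qed.

Lemma g_max k s0 : exists M, 0 < M /\ forall s r, Rabs (s - s0) <= 1 -> 0 <= r ->
  Rabs (g k s r) <= M * exp (-r) /\ Rabs (g (S k) s r) <= M * exp (-r) /\ Rabs (g (S (S k)) s r) <= M * exp (-r).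
Proof.
  destruct (g_bound k s0) as [M0 [H0 B0]].
  destruct (g_bound (S k) s0) as [M1 [H1 B1]].
  destruct (g_bound (S (S k)) s0) as [M2 [H2 B2]].
  exists (M0 + M1 + M2). split. lra. intros s r Hs Hr.
  pose proof (exp_pos (-r)).
  specialize (B0 s r Hs Hr). specialize (B1 s r Hs Hr). specialize (B2 s r Hs Hr).
  repeat split; nra.
Qed.

Lemma g_int_deriv k s : is_derive (fun s => RInt_gen (g k s) F0 FI) s (RInt_gen (g (S k) s) F0 FI).
Proof.
  destruct (g_max k s) as [M [HM HB]].
  apply (param_deriv (g k) (g (S k)) (g (S (S k))) s M).
  - intros; apply g_der.
  - intros; apply g_der.
  - intros; apply g_cont.
  - intros; apply g_cont.
  - exact HB.
Qed.

Lemma g_ex k s : ex_RInt_gen (g k s) F0 FI.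
Proof.
  destruct (g_bound k s) as [M [HM HB]].
  apply (RI_exist _ M (g_cont k s)). intros r Hr. apply HB; auto.
  rewrite Rminus_diag, Rabs_R0; lra.
Qed.

Lemma Ai_g s : Ai s = / PI * RInt_gen (g 0 s) F0 FI.
Proof.
  unfold Ai. f_equal. f_equal. apply functional_extensionality. intro r.
  unfold g. simpl. replace ((0 + 1) * (PI / 3)) with (PI/3) by ring. ring.
Qed.

Definition Aip s := / PI * RInt_gen (g 1 s) F0 FI.

Lemma Ai_der s : is_derive Ai s (Aip s).
Proof.
  apply is_derive_ext with (fun s => / PI * RInt_gen (g 0 s) F0 FI).
  { intro t. symmetry. apply Ai_g. }
  unfold Aip. apply is_derive_scal. apply g_int_deriv.
Qed.

Definition kk s r := exp (- r^3/3 - s * r / 2) * sin (- (sqrt 3 * s * r / 2)).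

Lemma kk_der s r : is_derive (kk s) r (g 2 s r - s * g 0 s r).
Proof.
  unfold kk, g. auto_derive. auto.
  simpl INR.
  replace ((1 + 1 + 1) * (PI / 3) - sqrt 3 * s * r / 2) with (PI - sqrt 3 * s * r / 2) by field.
  rewrite sin_PI_x.
  replace ((0 + 1) * (PI / 3) - sqrt 3 * s * r / 2) with (PI/3 + - (sqrt 3 * s * r / 2)) by field.
  rewrite sin_plus, sin_PI3, cos_PI3, sin_neg, cos_neg.
  replace (- (r * (r * (r * 1))) / 3 + - (s * r * / 2)) with (- r ^ 3 / 3 - s * r / 2) by (unfold Rdiv; ring).
  replace (- (sqrt 3 * s * r * / 2)) with (- (sqrt 3 * s * r / 2)) by (unfold Rdiv; ring).
  rewrite sin_neg, cos_neg. unfold Rdiv.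
  replace (exp (- (r * (r * (r * 1))) * / 3 + - (s * r * / 2))) with (exp (- r ^ 3 * / 3 - s * r * / 2)) by (f_equal; ring).
  match goal with |- ?a = ?b => change (@eq R a b) end. field.
Qed.

Lemma g2_eq s : RInt_gen (g 2 s) F0 FI = s * RInt_gen (g 0 s) F0 FI.
Proof.
  assert (HD : forall r, Derive (kk s) r = g 2 s r - s * g 0 s r).
  { intro r. apply is_derive_unique. apply kk_der. }
  assert (H0 : is_RInt_gen (fun r => g 2 s r - s * g 0 s r) F0 FI 0).
  { apply is_RInt_gen_ext with (Derive (kk s)).
    { apply filter_forall. intros ab x _. apply HD. }
    assert (Hk0 : kk s 0 = 0) by (unfold kk; replace (- (sqrt 3 * s * 0 / 2)) with 0 by field; rewrite sin_0; ring).
    replace 0 with (0 - kk s 0) at 2 by (rewrite Hk0; ring).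
    apply is_RInt_gen_Derive.
    - apply filter_forall. intros ab x _. eexists. apply kk_der.
    - apply filter_forall. intros ab x _.
      apply continuous_ext with (fun r => g 2 s r - s * g 0 s r). intro; symmetry; apply HD.
      apply (continuous_minus (V:=R_NormedModule)). apply g_cont.
      apply (continuous_scal (V:=R_NormedModule) (fun _ => s) (g 0 s)). apply continuous_const. apply g_cont.
    - intros P HP. unfold filtermap, at_point. apply locally_singleton. exact HP.
    - assert (HB : 0 <= Rabs s / 2) by (pose proof (Rabs_pos s); lra).
      destruct (exp_poly_bound 0 0 (Rabs s / 2) 0 (Rle_refl 0) HB) as [M [HM Hb]].
      apply lim_exp_bound with M. intros r Hr. unfold kk.
      eapply Rle_trans; [|apply (Hb r Hr)]. simpl. rewrite Rmult_1_l.
      rewrite Rabs_mult, (Rabs_right (exp _)) by (left; apply exp_pos).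
      match goal with |- _ <= exp ?X => rewrite <- (Rmult_1_r (exp X)) end.
      apply Rmult_le_compat. left; apply exp_pos. apply Rabs_pos.
      apply exp_le. assert (- s * r <= Rabs s * r) by (apply Rmult_le_compat_r; [lra| pose proof (Rabs_maj2 s); lra]). simpl. lra.
      apply Rabs_le. apply SIN_bound. }
  assert (H1 : is_RInt_gen (fun r => g 2 s r - s * g 0 s r) F0 FI
      (RInt_gen (g 2 s) F0 FI - s * RInt_gen (g 0 s) F0 FI)).
  { apply (is_RInt_gen_minus (V:=R_NormedModule)).
    apply (RInt_gen_correct (V:=R_CompleteNormedModule)). apply g_ex.
    apply (is_RInt_gen_scal (V:=R_NormedModule)).
    apply (RInt_gen_correct (V:=R_CompleteNormedModule)). apply g_ex. }
  pose proof (is_RInt_gen_unique (V:=R_CompleteNormedModule) _ _ H0) as U0.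
  pose proof (is_RInt_gen_unique (V:=R_CompleteNormedModule) _ _ H1) as U1.
  rewrite U0 in U1. lra.
Qed.

Lemma Aip_der s : is_derive Aip s (s * Ai s).
Proof.
  rewrite Ai_g. replace (s * (/ PI * RInt_gen (g 0 s) F0 FI)) with (/ PI * RInt_gen (g 2 s) F0 FI)
    by (rewrite g2_eq; ring).
  unfold Aip. apply is_derive_scal. apply g_int_deriv.
Qed.

Lemma der_eg (A B P Q : R -> R) x dA dB dP dQ :
  is_derive A x dA -> is_derive B x dB -> is_derive P x dP -> is_derive Q x dQ ->
  is_derive (fun x => exp (A x) * (P x * sin (B x) + Q x * cos (B x))) x
    (exp (A x) * ((dA * P x + dP - Q x * dB) * sin (B x) + (dA * Q x + dQ + P x * dB) * cos (B x))).
Proof.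
  intros HA HB HP HQ.
  auto_derive.
  - repeat split; eexists; eauto.
  - change (fun x0 : R => A x0) with A. change (fun x0 : R => B x0) with B. change (fun x0 : R => P x0) with P. change (fun x0 : R => Q x0) with Q.
    rewrite (is_derive_unique _ _ _ HA), (is_derive_unique _ _ _ HB), (is_derive_unique _ _ _ HP), (is_derive_unique _ _ _ HQ).
    ring.
Qed.
Definition ca s c r := c^3/3 - s*c + (c^2 - s)*r/2 - c*r^2/2 - r^3/3.
Definition cb s c r := sqrt 3 / 2 * ((c^2 - s)*r + c*r^2).
Definition cac s c r := c^2 - s + c*r - r^2/2.
Definition cbc c r := sqrt 3 * (c*r + r^2/2).
Definition ch s c r := exp (ca s c r) * sin (PI/3 + cb s c r).
Definition ch1 s c r := exp (ca s c r) * (cac s c r * sin (PI/3 + cb s c r) + cbc c r * cos (PI/3 + cb s c r)).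
Definition ch2 s c r := exp (ca s c r) * ((2*c + r + cac s c r ^2 - cbc c r ^2) * sin (PI/3 + cb s c r)
    + (sqrt 3 * r + 2 * cac s c r * cbc c r) * cos (PI/3 + cb s c r)).
Definition ck s c r := exp (ca s c r) * sin (cb s c r).

Ltac req := match goal with |- ?a = ?b => change (@eq R a b) end.

Lemma is_derive_eq (f : R -> R) x l l' : is_derive f x l -> l = l' -> is_derive f x l'.
Proof. intros H ->. exact H. Qed.

Lemma ch_der s c r : is_derive (fun c => ch s c r) c (ch1 s c r).
Proof.
  apply (is_derive_ext (fun c => exp (ca s c r) * (1 * sin (PI/3 + cb s c r) + 0 * cos (PI/3 + cb s c r)))).
  { intro t. unfold ch. req. ring. }
  eapply is_derive_eq. apply (der_eg (fun c => ca s c r) (fun c => PI/3 + cb s c r) (fun _ => 1) (fun _ => 0) c (cac s c r) (cbc c r) 0 0).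
  1,2: unfold ca, cb, cac, cbc; auto_derive; auto; req; field.
  1,2: auto_derive; auto.
  unfold ch1. req. ring.
Qed.

Lemma ch1_der s c r : is_derive (fun c => ch1 s c r) c (ch2 s c r).
Proof.
  unfold ch1.
  eapply is_derive_eq. apply (der_eg (fun c => ca s c r) (fun c => PI/3 + cb s c r) (fun c => cac s c r) (fun c => cbc c r) c (cac s c r) (cbc c r) (2*c + r) (sqrt 3 * r)).
  1,2,3,4: unfold ca, cb, cac, cbc; auto_derive; auto; req; field.
  unfold ch2. req. ring.
Qed.

Lemma ck_der s c r : is_derive (ck s c) r (ch1 s c r).
Proof.
  apply (is_derive_ext (fun r => exp (ca s c r) * (1 * sin (cb s c r) + 0 * cos (cb s c r)))).
  { intro t. unfold ck. req. ring. }
  eapply is_derive_eq. apply (der_eg (fun r => ca s c r) (fun r => cb s c r) (fun _ => 1) (fun _ => 0) r ((c^2 - s)/2 - c*r - r^2) (sqrt 3 / 2 * (c^2 - s + 2*c*r)) 0 0).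
  1,2: unfold ca, cb; auto_derive; auto; req; field.
  1,2: auto_derive; auto.
  req. unfold ch1, cac, cbc. rewrite sin_plus, cos_plus, sin_PI3, cos_PI3.
  assert (H3 : sqrt 3 * sqrt 3 = 3) by (apply sqrt_sqrt; lra).
  set (q := sqrt 3) in *. set (E := exp _). set (S := sin _). set (C := cos _).
  replace (q * (c * r + r ^ 2 / 2) * (1 / 2 * C - q / 2 * S)) with (q * (c * r + r ^ 2 / 2) * (1 / 2) * C - (q * q) * (c * r + r ^ 2 / 2) / 2 * S) by field.
  rewrite H3. field.
Qed.


Lemma abs_trig E u v t : 0 <= E -> Rabs (E * (u * sin t + v * cos t)) <= E * (Rabs u + Rabs v).
Proof.
  intro HE. rewrite Rabs_mult, (Rabs_right E) by lra. apply Rmult_le_compat_l; auto.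
  eapply Rle_trans. apply Rabs_triang. rewrite !Rabs_mult.
  pose proof (Rabs_pos u). pose proof (Rabs_pos v).
  assert (Rabs (sin t) <= 1) by (apply Rabs_le; apply SIN_bound).
  assert (Rabs (cos t) <= 1) by (apply Rabs_le; apply COS_bound).
  pose proof (Rabs_pos (sin t)). pose proof (Rabs_pos (cos t)). nra.
Qed.

Lemma sqrt3_le2 : 0 <= sqrt 3 <= 2.
Proof.
  split. apply sqrt_pos.
  rewrite <- (sqrt_square 2) by lra. apply sqrt_le_1_alt. lra.
Qed.

Lemma ch_bounds s c0 : exists M, 0 < M /\ forall c r, Rabs (c - c0) <= 1 -> 0 <= r ->
  Rabs (ch s c r) <= M * exp (-r) /\ Rabs (ch1 s c r) <= M * exp (-r) /\ Rabs (ch2 s c r) <= M * exp (-r)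
  /\ Rabs (ck s c r) <= M * exp (-r).
Proof.
  set (C := Rabs c0 + 1). set (P := C^2 + Rabs s + 2*C + 2).
  assert (HC : 1 <= C) by (unfold C; pose proof (Rabs_pos c0); lra).
  assert (HP : 1 <= P) by (unfold P; pose proof (Rabs_pos s); nra).
  assert (HA : 0 <= C/2) by lra.
  assert (HB : 0 <= (C^2 + Rabs s)/2) by (pose proof (Rabs_pos s); nra).
  destruct (exp_poly_bound 4 (C/2) ((C^2 + Rabs s)/2) (C^3/3 + Rabs s * C) HA HB) as [M0 [HM0 HM]].
  exists (6 * P^2 * M0). split. apply Rmult_lt_0_compat; [nra|auto].
  intros c r Hc Hr.
  assert (Hcc : Rabs c <= C) by (unfold C; pose proof (Rabs_triang_inv c c0); pose proof (Rabs_triang (c - c0) c0);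
    replace (c - c0 + c0) with c in * by ring; lra).
  assert (Hc1 : - C <= c <= C) by (apply Rabs_le_between; lra) || (split; pose proof (Rabs_le_between c C); unfold Rabs in *; destruct Rcase_abs; lra).
  pose proof (Rabs_pos s) as Hs0.
  assert (Hs1 : - Rabs s <= s <= Rabs s) by (split; [pose proof (Rabs_maj2 s) | pose proof (Rle_abs s)]; lra).
  pose proof sqrt3_le2 as Hq.
  set (X := P * (1 + r)^2).
  assert (HX : 1 <= X) by (unfold X; assert (1 <= (1+r)^2) by nra; nra).
  assert (HXe : P * (1+r)^2 = P + 2 * (P * r) + P * r^2) by ring.
  assert (Hr2 : 0 <= r^2) by nra.
  assert (HPr : C * r <= P * r) by (apply Rmult_le_compat_r; unfold P in *; nra).
  assert (HPr' : r <= P * r) by nra.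
  assert (HPr2 : r^2 <= P * r^2) by nra.
  assert (Hcr1 : c * r <= C * r) by nra.
  assert (Hcr2 : - (c * r) <= C * r) by nra.
  assert (Hc2 : c^2 <= C^2) by nra.
  assert (F1 : Rabs (cac s c r) <= X).
  { unfold cac, X. apply Rabs_le. unfold P in *. split; nra. }
  assert (F2 : Rabs (cbc c r) <= X).
  { unfold cbc, X. rewrite Rabs_mult, Rabs_right by lra.
    assert (Rabs (c * r + r^2/2) <= C * r + r^2) by (apply Rabs_le; split; nra).
    apply Rle_trans with (2 * (C * r + r^2)). pose proof (Rabs_pos (c * r + r^2/2)). nra.
    unfold P in *. nra. }
  assert (F3 : Rabs (2*c + r) <= X).
  { unfold X. apply Rabs_le. unfold P in *. split; nra. }
  assert (F4 : Rabs (sqrt 3 * r) <= X).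
  { unfold X. rewrite Rabs_mult, (Rabs_right (sqrt 3)), (Rabs_right r) by lra. nra. }
  assert (F5 : exp (ca s c r) <= exp (- r^3/3 + C/2 * r^2 + (C^2 + Rabs s)/2 * r + (C^3/3 + Rabs s * C))).
  { apply exp_le. unfold ca.
    assert (c^3 <= C^3).
    { assert (c^3 <= Rabs c ^3) by (rewrite RPow_abs; apply Rle_abs).
      assert (Rabs c ^ 3 <= C^3) by (apply pow_incr; split; [apply Rabs_pos|lra]). lra. }
    assert (- s * c <= Rabs s * C) by nra.
    assert (c^2 * r <= C^2 * r) by nra.
    assert (- s * r <= Rabs s * r) by nra.
    assert (- c * r^2 <= C * r^2) by nra.
    lra. }
  assert (Hfin : forall Y, Y <= 6 * X^2 * exp (ca s c r) -> Y <= 6 * P^2 * M0 * exp (-r)).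
  { intros Y HY. eapply Rle_trans. apply HY.
    replace (6 * X^2) with (6 * P^2 * (1 + r)^4) by (unfold X; ring).
    rewrite !Rmult_assoc. apply Rmult_le_compat_l. lra. apply Rmult_le_compat_l. nra.
    eapply Rle_trans; [|apply (HM r Hr)]. apply Rmult_le_compat_l. apply pow_le; lra. exact F5. }
  pose proof (exp_pos (ca s c r)) as He.
  assert (HX2 : X <= X^2) by nra.
  repeat split; apply Hfin.
  4: { unfold ck. rewrite Rabs_mult, Rabs_right by lra.
    assert (Rabs (sin (cb s c r)) <= 1) by (apply Rabs_le; apply SIN_bound).
    pose proof (Rabs_pos (sin (cb s c r))). nra. }
  - unfold ch. rewrite Rabs_mult, Rabs_right by lra.
    assert (Rabs (sin (PI / 3 + cb s c r)) <= 1) by (apply Rabs_le; apply SIN_bound).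
    pose proof (Rabs_pos (sin (PI / 3 + cb s c r))). nra.
  - unfold ch1. eapply Rle_trans. apply abs_trig; lra. nra.
  - unfold ch2. eapply Rle_trans. apply abs_trig; lra.
    assert (Rabs (2 * c + r + cac s c r ^ 2 - cbc c r ^ 2) <= X + X^2 + X^2).
    { eapply Rle_trans. apply Rabs_triang. rewrite Rabs_Ropp.
      eapply Rle_trans. apply Rplus_le_compat_r. apply Rabs_triang.
      rewrite <- !RPow_abs. pose proof (Rabs_pos (cac s c r)). pose proof (Rabs_pos (cbc c r)).
      assert (Rabs (cac s c r) ^2 <= X^2) by (apply pow_incr; lra).
      assert (Rabs (cbc c r) ^2 <= X^2) by (apply pow_incr; lra). lra. }
    assert (Rabs (sqrt 3 * r + 2 * cac s c r * cbc c r) <= X + 2 * X^2).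
    { eapply Rle_trans. apply Rabs_triang.
      assert (Rabs (2 * cac s c r * cbc c r) <= 2 * X^2).
      { rewrite !Rabs_mult. rewrite (Rabs_right 2); [|lra].
        pose proof (Rabs_pos (cac s c r)). pose proof (Rabs_pos (cbc c r)).
        assert (Rabs (cac s c r) * Rabs (cbc c r) <= X * X) by (apply Rmult_le_compat; lra). nra. }
      lra. }
    nra.
Qed.

Lemma ch_cont s c r : continuous (ch s c) r.
Proof. apply (ex_derive_continuous (V:=R_NormedModule) (ch s c)). unfold ch, ca, cb. auto_derive. auto. Qed.
Lemma ch1_cont s c r : continuous (ch1 s c) r.
Proof. apply (ex_derive_continuous (V:=R_NormedModule) (ch1 s c)). unfold ch1, ca, cb, cac, cbc. auto_derive. auto. Qed.

Lemma ch1_int s c : RInt_gen (ch1 s c) F0 FI = 0.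
Proof.
  destruct (ch_bounds s c) as [M [HM HB]].
  assert (HD : forall r, Derive (ck s c) r = ch1 s c r).
  { intro r. apply is_derive_unique. apply ck_der. }
  apply (is_RInt_gen_unique (V:=R_CompleteNormedModule)).
  apply is_RInt_gen_ext with (Derive (ck s c)).
  { apply filter_forall. intros ab x _. apply HD. }
  assert (Hk0 : ck s c 0 = 0).
  { unfold ck, cb. replace (sqrt 3 / 2 * ((c ^ 2 - s) * 0 + c * 0 ^ 2)) with 0 by ring. rewrite sin_0. ring. }
  replace 0 with (0 - ck s c 0) at 2 by (rewrite Hk0; ring).
  apply is_RInt_gen_Derive.
  - apply filter_forall. intros ab x _. eexists. apply ck_der.
  - apply filter_forall. intros ab x _.
    apply continuous_ext with (ch1 s c). intro; symmetry; apply HD.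
    apply ch1_cont.
  - intros P HP. unfold filtermap, at_point. apply locally_singleton. exact HP.
  - apply lim_exp_bound with M. intros r Hr. apply (HB c r); auto.
    rewrite Rminus_diag, Rabs_R0; lra.
Qed.

Lemma J_const s c : RInt_gen (ch s c) F0 FI = RInt_gen (ch s 0) F0 FI.
Proof.
  assert (HJ : forall c, is_derive (fun c => RInt_gen (ch s c) F0 FI) c 0).
  { intro c0. apply is_derive_eq with (RInt_gen (ch1 s c0) F0 FI); [|apply ch1_int].
    destruct (ch_bounds s c0) as [M [HM HB]].
    apply (param_deriv (ch s) (ch1 s) (ch2 s) c0 M).
    - intros; apply ch_der.
    - intros; apply ch1_der.
    - intros; apply ch_cont.
    - intros; apply ch1_cont.
    - intros c1 r H1 H2. destruct (HB c1 r H1 H2) as [? [? [? ?]]]. auto. }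
  pose proof (mvt_bound (fun c => RInt_gen (ch s c) F0 FI) (fun _ => 0) 0 c 0 HJ) as H.
  assert (Rabs (RInt_gen (ch s c) F0 FI - RInt_gen (ch s 0) F0 FI) <= 0).
  { eapply Rle_trans. apply H. intros; rewrite Rabs_R0; lra. lra. }
  pose proof (Rabs_pos (RInt_gen (ch s c) F0 FI - RInt_gen (ch s 0) F0 FI)).
  assert (Rabs (RInt_gen (ch s c) F0 FI - RInt_gen (ch s 0) F0 FI) = 0) by lra.
  apply Rabs_eq_0 in H2. lra.
Qed.

Lemma ch0_g s : ch s 0 = g 0 s.
Proof.
  apply functional_extensionality. intro r. unfold ch, g, ca, cb. simpl.
  replace (0 * (0 * (0 * 1)) / 3 - s * 0 + (0 * (0 * 1) - s) * r / 2 - 0 * (r * (r * 1)) / 2 - r * (r * (r * 1)) / 3)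
    with (- (r * (r * r)) / 3 - s * r / 2) by field.
  replace (PI / 3 + sqrt 3 / 2 * ((0 * (0 * 1) - s) * r + 0 * (r * (r * 1))))
    with ((0 + 1) * (PI / 3) - sqrt 3 * s * r / 2) by field.
  replace (r * (r * (r * 1))) with (r * (r * r)) by ring. ring.
Qed.

Lemma Ai_bound L : 0 <= L -> exists C, 0 < C /\ forall s, - L <= s ->
  Rabs (Ai s) <= C * exp (- (2/3) * (sqrt s)^3).
Proof.
  intro HL.
  destruct (exp_poly_bound 0 0 0 0 (Rle_refl 0) (Rle_refl 0)) as [M0 [HM0 H0]].
  assert (HL2 : 0 <= L/2) by lra.
  destruct (exp_poly_bound 0 0 (L/2) 0 (Rle_refl 0) HL2) as [M1 [HM1 H1]].
  pose proof PI_RGT_0 as HPI.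
  exists ((M0 + M1) / PI). split. apply Rdiv_lt_0_compat; lra.
  intros s Hs. rewrite Ai_g. rewrite Rabs_mult, Rabs_right by (left; apply Rinv_0_lt_compat; lra).
  replace ((M0 + M1) / PI * exp (- (2 / 3) * sqrt s ^ 3)) with (/ PI * ((M0 + M1) * exp (- (2 / 3) * sqrt s ^ 3))) by (unfold Rdiv; ring).
  apply Rmult_le_compat_l. left; apply Rinv_0_lt_compat; lra.
  destruct (Rle_dec 0 s) as [Hs0|Hs0].
  - rewrite <- ch0_g, <- (J_const s (sqrt s)).
    set (c := sqrt s).
    assert (Hc0 : 0 <= c) by apply sqrt_pos.
    assert (Hcs : c * c = s) by (apply sqrt_sqrt; lra).
    eapply Rle_trans. apply RI_bound with (M := M0 * exp (- (2/3) * c^3)).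
    + apply ch_cont.
    + intros r Hr. unfold ch. rewrite Rabs_mult, Rabs_right by (left; apply exp_pos).
      assert (Rabs (sin (PI / 3 + cb s c r)) <= 1) by (apply Rabs_le; apply SIN_bound).
      pose proof (Rabs_pos (sin (PI / 3 + cb s c r))).
      apply Rle_trans with (exp (ca s c r)). pose proof (exp_pos (ca s c r)). nra.
      specialize (H0 r Hr).
      apply Rle_trans with (exp (- (2/3) * c^3) * ((1 + r)^0 * exp (- r^3/3 + 0 * r^2 + 0 * r + 0))).
      * simpl pow at 1. rewrite Rmult_1_l. rewrite <- exp_plus. apply exp_le. unfold ca. rewrite <- Hcs.
        assert (0 <= c * r^2) by (apply Rmult_le_pos; [lra| nra]). simpl. nra.
      * rewrite (Rmult_comm M0), Rmult_assoc. apply Rmult_le_compat_l. left; apply exp_pos. exact H0.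
    + pose proof (exp_pos (- (2 / 3) * c ^ 3)). nra.
  - assert (Hsq : sqrt s = 0) by (apply sqrt_neg_0; lra).
    rewrite Hsq. replace (- (2 / 3) * 0 ^ 3) with 0 by ring. rewrite exp_0, Rmult_1_r.
    eapply Rle_trans. apply RI_bound with (M := M1).
    + apply g_cont.
    + intros r Hr. specialize (H1 r Hr). simpl in H1. rewrite Rmult_1_l in H1.
      eapply Rle_trans; [|apply H1]. unfold g. simpl. rewrite Rmult_1_l.
      rewrite Rabs_mult, Rabs_right by (left; apply exp_pos).
      assert (Rabs (sin ((0 + 1) * (PI / 3) - sqrt 3 * s * r / 2)) <= 1) by (apply Rabs_le; apply SIN_bound).
      pose proof (Rabs_pos (sin ((0 + 1) * (PI / 3) - sqrt 3 * s * r / 2))).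
      apply Rle_trans with (exp (- (r * (r * (r * 1))) / 3 - s * r / 2)).
      pose proof (exp_pos (- (r * (r * (r * 1))) / 3 - s * r / 2)). nra.
      apply exp_le. assert (- s * r <= L * r) by nra. lra.
    + lra.
Qed.

Definition EE s := exp (- (2/3) * (sqrt s)^3).

Lemma EE_mono s t : s <= t -> EE t <= EE s.
Proof.
  intro H. unfold EE. apply exp_le.
  assert (sqrt s ^ 3 <= sqrt t ^3) by (apply pow_incr; split; [apply sqrt_pos| apply sqrt_le_1_alt; auto]).
  lra.
Qed.

Lemma EE_pos s : 0 < EE s.
Proof. apply exp_pos. Qed.

Lemma Aip_bound L : 0 <= L -> exists C, 0 < C /\ forall s, - L <= s ->
  Rabs (Aip s) <= C * (2 + Rabs s) * EE s.
Proof.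
  intro HL. destruct (Ai_bound L HL) as [CA [HCA HA]].
  exists (2 * CA). split. lra. intros s Hs.
  assert (HT := taylor2 Ai Aip (fun t => t * Ai t) s 1 ((Rabs s + 1) * CA * EE s) Ai_der Aip_der).
  assert (HK : forall t, Rmin s (s + 1) <= t <= Rmax s (s + 1) -> Rabs (t * Ai t) <= (Rabs s + 1) * CA * EE s).
  { intros t Ht. rewrite Rmin_left, Rmax_right in Ht by lra.
    rewrite Rabs_mult, Rmult_assoc. apply Rmult_le_compat. apply Rabs_pos. apply Rabs_pos.
    apply Rabs_le. pose proof (Rabs_maj2 s); pose proof (Rle_abs s). lra.
    eapply Rle_trans. apply HA. lra. apply Rmult_le_compat_l. lra. apply EE_mono. lra. }
  specialize (HT HK).
  assert (H1 := HA (s + 1) ltac:(lra)). assert (H0 := HA s Hs).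
  fold (EE (s+1)) in H1. fold (EE s) in H0.
  pose proof (EE_mono s (s+1) ltac:(lra)).
  replace (1 * Aip s) with (Aip s) in HT by ring. replace (((Rabs s + 1) * CA * EE s) * 1^2) with ((Rabs s + 1) * CA * EE s) in HT by ring.
  assert (Rabs (Aip s) <= Rabs (Ai (s+1)) + Rabs (Ai s) + (Rabs s + 1) * CA * EE s).
  { replace (Aip s) with (- (Ai (s + 1) - Ai s - Aip s) + Ai (s+1) - Ai s) by ring.
    eapply Rle_trans. apply Rabs_triang. rewrite Rabs_Ropp.
    unfold Rminus at 2. eapply Rle_trans. apply Rplus_le_compat_r. apply Rabs_triang. rewrite Rabs_Ropp.
    replace (Ai (s + 1) + - Ai s - Aip s) with (Ai (s + 1) - Ai s - Aip s) by ring. lra. }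
  pose proof (EE_pos s). pose proof (Rabs_pos s).
  assert (Rabs (Ai (s+1)) <= CA * EE s) by (eapply Rle_trans; [apply H1| apply Rmult_le_compat_l; lra]).
  assert (E1 : (Rabs s + 1) * CA * EE s = Rabs s * (CA * EE s) + CA * EE s) by ring.
  assert (E2 : 2 * CA * (2 + Rabs s) * EE s = 4 * (CA * EE s) + 2 * (Rabs s * (CA * EE s))) by ring.
  assert (0 <= Rabs s * (CA * EE s)) by (apply Rmult_le_pos; [lra | apply Rmult_le_pos; lra]).
  assert (0 <= CA * EE s) by (apply Rmult_le_pos; lra).
  lra.
Qed.

Inductive pe := PC (c : R) | PX | PZ | PAdd (p q : pe) | PMul (p q : pe).

Fixpoint pev (p : pe) (x z : R) : R :=
  match p with
  | PC c => c | PX => x | PZ => z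
  | PAdd p q => pev p x z + pev q x z
  | PMul p q => pev p x z * pev q x z
  end.

Fixpoint pdx (p : pe) : pe :=
  match p with
  | PC _ => PC 0 | PX => PC 1 | PZ => PC 0
  | PAdd p q => PAdd (pdx p) (pdx q)
  | PMul p q => PAdd (PMul (pdx p) q) (PMul p (pdx q))
  end.

Fixpoint pb (p : pe) : R :=
  match p with
  | PC c => Rabs c | PX => 1 | PZ => 1
  | PAdd p q => pb p + pb q
  | PMul p q => pb p * pb q
  end.

Fixpoint pd (p : pe) : nat :=
  match p with
  | PC _ => 0 | PX => 1 | PZ => 1
  | PAdd p q => Nat.max (pd p) (pd q)
  | PMul p q => (pd p + pd q)%nat
  end.

Lemma pb_nonneg p : 0 <= pb p.
Proof.
  induction p; simpl; try lra. apply Rabs_pos. apply Rmult_le_pos; auto.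
Qed.

Lemma pev_bound p x z : Rabs (pev p x z) <= pb p * (1 + Rabs x + Rabs z) ^ (pd p).
Proof.
  set (T := 1 + Rabs x + Rabs z).
  assert (HT : 1 <= T) by (unfold T; pose proof (Rabs_pos x); pose proof (Rabs_pos z); lra).
  induction p; simpl.
  - lra.
  - unfold T; pose proof (Rabs_pos z); lra.
  - unfold T; pose proof (Rabs_pos x); lra.
  - eapply Rle_trans. apply Rabs_triang.
    pose proof (pb_nonneg p1). pose proof (pb_nonneg p2).
    assert (T ^ pd p1 <= T ^ Nat.max (pd p1) (pd p2)) by (apply Rle_pow; [lra| apply Nat.le_max_l]).
    assert (T ^ pd p2 <= T ^ Nat.max (pd p1) (pd p2)) by (apply Rle_pow; [lra| apply Nat.le_max_r]).
    assert (pb p1 * T ^ pd p1 <= pb p1 * T ^ Nat.max (pd p1) (pd p2)) by (apply Rmult_le_compat_l; auto).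
    assert (pb p2 * T ^ pd p2 <= pb p2 * T ^ Nat.max (pd p1) (pd p2)) by (apply Rmult_le_compat_l; auto).
    lra.
  - rewrite Rabs_mult, pow_add.
    replace (pb p1 * pb p2 * (T ^ pd p1 * T ^ pd p2)) with ((pb p1 * T ^ pd p1) * (pb p2 * T ^ pd p2)) by ring.
    apply Rmult_le_compat; auto; apply Rabs_pos.
Qed.

Lemma pdx_der p x z : is_derive (fun x => pev p x z) x (pev (pdx p) x z).
Proof.
  induction p; simpl.
  - apply (is_derive_const (K:=R_AbsRing) c).
  - apply (is_derive_id (K:=R_AbsRing)).
  - apply (is_derive_const (K:=R_AbsRing) z).
  - eapply is_derive_eq. apply (is_derive_plus (fun x => pev p1 x z) (fun x => pev p2 x z)); eauto.
    reflexivity.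
  - eapply is_derive_eq. apply (is_derive_mult (fun x => pev p1 x z) (fun x => pev p2 x z)); eauto.
    intros; apply Rmult_comm. simpl. unfold plus, mult; simpl. ring.
Qed.

Definition sigp (y a : R) := PAdd (PAdd (PMul PX PX) (PMul PZ PZ)) (PC (y^2 + a/4)).

Fixpoint PQ (y a : R) (n : nat) : pe * pe :=
  match n with
  | O => (PC 2, PC 0)
  | S n => let (P, Q) := PQ y a n in
      (PAdd (PAdd (pdx P) (PMul (PC (2*y)) (PMul PZ P))) (PMul (PMul (PC 2) PX) (PMul (sigp y a) Q)),
       PAdd (PAdd (pdx Q) (PMul (PC (2*y)) (PMul PZ Q))) (PMul (PMul (PC 2) PX) P))
  end.

Definition Dn (a y z : R) (n : nat) (x : R) : R :=
  exp (2 * x * y * z) * (pev (fst (PQ y a n)) x z * Ai (x^2 + y^2 + z^2 + a/4)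
                        + pev (snd (PQ y a n)) x z * Aip (x^2 + y^2 + z^2 + a/4)).

Lemma DAi t : Derive Ai t = Aip t.
Proof. apply is_derive_unique, Ai_der. Qed.
Lemma DAip t : Derive Aip t = t * Ai t.
Proof. apply is_derive_unique, Aip_der. Qed.
Lemma Dpev p z t : Derive (fun x => pev p x z) t = pev (pdx p) t z.
Proof. apply is_derive_unique, pdx_der. Qed.

Lemma Dn_der a y z n x : is_derive (Dn a y z n) x (Dn a y z (S n) x).
Proof.
  unfold Dn. simpl PQ. destruct (PQ y a n) as [P Q]. simpl fst. simpl snd.
  auto_derive.
  - split. eexists; apply pdx_der. split. eexists; apply Ai_der.
    split. eexists; apply pdx_der. split. eexists; apply Aip_der. exact I.
  - change (fun x0 : R => Ai x0) with Ai. change (fun x0 : R => Aip x0) with Aip.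
    rewrite DAi, DAip, !Dpev.
    replace (x * (x * 1) + y * (y * 1) + z * (z * 1) + a / 4) with (x ^ 2 + y ^ 2 + z ^ 2 + a / 4) by ring.
    set (sg := x ^ 2 + y ^ 2 + z ^ 2 + a / 4).
    set (A := Ai sg). set (B := Aip sg).
    unfold sigp. cbn [pev].
    replace (x * x + z * z + (y ^ 2 + a / 4)) with sg by (unfold sg; ring).
    set (p1 := pev P x z). set (p2 := pev Q x z). set (d1 := pev (pdx P) x z). set (d2 := pev (pdx Q) x z).
    set (E := exp _).
    req. ring.
Qed.

Lemma Derive_n_K a y z n x : Derive_n (fun x' => Kker a x' y z) n x = Dn a y z n x.
Proof.
  revert x. induction n as [|n IH]; intro x.
  - simpl. unfold Kker, Dn. simpl. ring.
  - simpl Derive_n. rewrite (Derive_ext _ _ x IH). apply is_derive_unique. apply Dn_der.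
Qed.
Lemma cubic_bound_eps e A B : 0 < e -> 0 <= A -> 0 <= B -> exists T0, forall r, 0 <= r ->
  - e * r^3 + A * r^2 + B * r <= T0.
Proof.
  intros He HA HB. set (T := (A + B + 1) / e + 1).
  assert (HT1 : 1 <= T) by (unfold T; assert (0 <= (A + B + 1)/e) by (unfold Rdiv; apply Rmult_le_pos; [lra| left; apply Rinv_0_lt_compat; lra]); lra).
  assert (HeT : e * T >= A + B + 1).
  { unfold T. replace (e * ((A + B + 1) / e + 1)) with (A + B + 1 + e) by (field; lra). lra. }
  exists (A * T^2 + B * T). intros r Hr.
  destruct (Rle_dec r T) as [H|H].
  - assert (r^2 <= T^2) by (apply pow_incr; lra).
    assert (0 <= r^3) by (apply pow_le; lra).
    assert (A * r^2 <= A*T^2) by (apply Rmult_le_compat_l; lra).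
    assert (B * r <= B * T) by (apply Rmult_le_compat_l; lra).
    assert (0 <= e * r^3) by (apply Rmult_le_pos; lra). lra.
  - assert (Hr1 : 1 <= r) by lra.
    assert (e * r^3 >= A * r^2 + B * r).
    { assert (e * r >= e * T) by (apply Rle_ge, Rmult_le_compat_l; lra).
      assert (e * r >= A + B + 1) by lra.
      assert (r * r >= r) by nra.
      replace (e * r^3) with ((e * r) * (r * r)) by ring.
      assert ((e * r) * (r * r) >= (A + B + 1) * (r * r)) by (apply Rle_ge, Rmult_le_compat_r; nra).
      simpl. nra. }
    assert (0 <= A * T^2 + B*T).
    { apply Rplus_le_le_0_compat; apply Rmult_le_pos; try apply pow_le; lra. }
    lra.
Qed.

Lemma t3_bound t R L : 0 <= t -> 0 <= R -> 0 <= L -> R^2 - L <= t^2 -> R^3 - 2 * L * R <= t^3.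
Proof.
  intros Ht HR HL H.
  destruct (Rle_dec (R^2) L) as [H1|H1].
  - assert (R * (R^2 - 2*L) <= 0) by nra. assert (0 <= t^3) by (apply pow_le; lra). 
    replace (R^3 - 2 * L * R) with (R * (R^2 - 2*L)) by ring. lra.
  - assert (HR0 : 0 < R) by nra.
    assert (HtR : R^2 - L <= t * R).
    { destruct (Rle_dec (R^2 - L) (t * R)) as [h|h]; auto.
      exfalso. assert (Hx : (t * R)^2 < (R^2 - L)^2).
      { assert (0 <= t * R) by nra. simpl. nra. }
      assert ((t*R)^2 = t^2 * R^2) by ring.
      assert (t^2 * R^2 >= (R^2 - L) * R^2) by (apply Rle_ge, Rmult_le_compat_r; nra).
      nra. }
    assert (t^3 * R >= (R^2 - L)^2).
    { replace (t^3 * R) with (t^2 * (t * R)) by ring.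
      assert (t^2 * (t*R) >= (R^2 - L) * (t * R)) by (apply Rle_ge, Rmult_le_compat_r; nra).
      assert ((R^2 - L) * (t * R) >= (R^2 - L) * (R^2 - L)) by (apply Rle_ge, Rmult_le_compat_l; lra).
      simpl in *. nra. }
    assert ((R^3 - 2 * L * R) * R <= t^3 * R) by nra.
    apply Rmult_le_reg_r with R; auto.
Qed.

Theorem lemma2 (a y : R) (n : nat) (rho : R) :
  0 < rho < 1 ->
  exists C : R, 0 < C /\
    forall x z : R,
      Rabs (Derive_n (fun x' => Kker a x' y z) n x)
        < C * exp (- (2 * rho / 3) * (sqrt (x ^ 2 + z ^ 2)) ^ 3).
Proof.
  intros Hrho.
  set (L := Rabs a / 4).
  assert (HL : 0 <= L) by (unfold L; pose proof (Rabs_pos a); lra).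
  destruct (Ai_bound L HL) as [CA [HCA HA]].
  destruct (Aip_bound L HL) as [CB [HCB HB]].
  set (P := fst (PQ y a n)). set (Q := snd (PQ y a n)).
  set (N := (pd P + pd Q)%nat).
  pose proof (pb_nonneg P) as HbP. pose proof (pb_nonneg Q) as HbQ.
  set (K0 := 2^N * (pb P * CA + pb Q * CB * (2 + y^2 + L))).
  assert (HK0 : 0 <= K0).
  { unfold K0. apply Rmult_le_pos. apply pow_le; lra.
    assert (0 <= y^2) by nra.
    apply Rplus_le_le_0_compat; repeat apply Rmult_le_pos; lra. }
  assert (He : 0 < 2/3 * (1 - rho)) by lra.
  assert (Hy : 0 <= Rabs y) by apply Rabs_pos.
  assert (HB' : 0 <= INR (N + 2) + 4/3 * L) by (pose proof (pos_INR (N+2)); lra).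
  destruct (cubic_bound_eps (2/3 * (1 - rho)) (Rabs y) (INR (N + 2) + 4/3 * L) He Hy HB') as [T1 HT1].
  exists (K0 * exp T1 + 1). split.
  { pose proof (exp_pos T1). nra. }
  intros x z. rewrite Derive_n_K. unfold Dn. fold P Q.
  set (R0 := sqrt (x^2 + z^2)).
  assert (HR0 : 0 <= R0) by apply sqrt_pos.
  assert (HR2 : R0^2 = x^2 + z^2) by (unfold R0; rewrite <- Rsqr_pow2, Rsqr_sqrt; [ring| nra]).
  assert (Hx : Rabs x <= R0) by (apply Rabs_le; split; nra).
  assert (Hz : Rabs z <= R0) by (apply Rabs_le; split; nra).
  set (sg := x ^ 2 + y ^ 2 + z ^ 2 + a / 4).
  assert (Hsg : - L <= sg) by (unfold sg, L; pose proof (Rabs_maj2 a); nra).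
  set (T := 1 + Rabs x + Rabs z).
  assert (HT1' : 1 <= T) by (unfold T; pose proof (Rabs_pos x); pose proof (Rabs_pos z); lra).
  assert (HTR : T <= 2 * (1 + R0)) by (unfold T; lra).
  assert (HTN : forall d, (d <= N)%nat -> T ^ d <= 2^N * (1 + R0)^N).
  { intros d Hd. apply Rle_trans with (T ^ N). apply Rle_pow; auto.
    rewrite <- Rpow_mult_distr. apply pow_incr. lra. }
  assert (HP : Rabs (pev P x z) <= pb P * (2^N * (1 + R0)^N)).
  { eapply Rle_trans. apply pev_bound. fold T. apply Rmult_le_compat_l; auto. apply HTN. unfold N; lia. }
  assert (HQ : Rabs (pev Q x z) <= pb Q * (2^N * (1 + R0)^N)).
  { eapply Rle_trans. apply pev_bound. fold T. apply Rmult_le_compat_l; auto. apply HTN. unfold N; lia. }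
  specialize (HA sg Hsg). specialize (HB sg Hsg). fold (EE sg) in HA.
  assert (Hsg2 : 2 + Rabs sg <= (2 + y^2 + L) * (1 + R0)^2).
  { assert (Rabs sg <= R0^2 + y^2 + L).
    { apply Rabs_le. unfold sg, L in *. pose proof (Rabs_maj2 a). pose proof (Rle_abs a). split; nra. }
    assert (0 <= y^2) by nra. nra. }
  pose proof (EE_pos sg) as HEE.
  set (E2 := exp (2 * x * y * z)).
  assert (HE2 : 0 < E2) by apply exp_pos.
  assert (Hmain : Rabs (E2 * (pev P x z * Ai sg + pev Q x z * Aip sg)) <= E2 * (K0 * (1 + R0)^(N+2) * EE sg)).
  { rewrite Rabs_mult, (Rabs_right E2) by lra. apply Rmult_le_compat_l. lra.
    eapply Rle_trans. apply Rabs_triang. rewrite !Rabs_mult.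
    assert (H1 : Rabs (pev P x z) * Rabs (Ai sg) <= pb P * (2^N * (1 + R0)^N) * (CA * EE sg)).
    { apply Rmult_le_compat; auto; apply Rabs_pos. }
    assert (H2 : Rabs (pev Q x z) * Rabs (Aip sg) <= pb Q * (2^N * (1 + R0)^N) * (CB * ((2 + y^2 + L) * (1 + R0)^2) * EE sg)).
    { apply Rmult_le_compat; try apply Rabs_pos; auto. eapply Rle_trans. apply HB.
      apply Rmult_le_compat_r. lra. apply Rmult_le_compat_l. lra. exact Hsg2. }
    assert (H3 : 1 <= (1 + R0)^2) by nra.
    assert (H4 : 0 <= 2^N * (1 + R0)^N) by (apply Rmult_le_pos; apply pow_le; lra).
    assert (H5 : pb P * (2^N * (1 + R0)^N) * (CA * EE sg) <= pb P * (2^N * (1 + R0)^N) * (CA * EE sg) * (1 + R0)^2).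
    { rewrite <- (Rmult_1_r (pb P * (2^N * (1 + R0)^N) * (CA * EE sg))) at 1. apply Rmult_le_compat_l; auto.
      repeat apply Rmult_le_pos; try apply pow_le; lra. }
    replace (K0 * (1 + R0)^(N+2) * EE sg) with
      (pb P * (2^N * (1 + R0)^N) * (CA * EE sg) * (1 + R0)^2 +
       pb Q * (2^N * (1 + R0)^N) * (CB * ((2 + y^2 + L) * (1 + R0)^2) * EE sg))
      by (unfold K0; rewrite pow_add; ring).
    lra. }
  eapply Rle_lt_trans. apply Hmain.
  assert (Hxyz : 2 * x * y * z <= Rabs y * R0^2).
  { rewrite HR2. assert (2 * Rabs x * Rabs z <= x^2 + z^2).
    { assert (0 <= (Rabs x - Rabs z)^2) by apply pow2_ge_0. rewrite <- (pow2_abs x), <- (pow2_abs z). nra. }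
    assert (2 * x * y * z <= Rabs (2 * x * y * z)) by apply Rle_abs.
    rewrite !Rabs_mult, (Rabs_right 2) in H0 by lra.
    assert (Rabs y * (2 * Rabs x * Rabs z) <= Rabs y * (x^2 + z^2)) by (apply Rmult_le_compat_l; auto).
    nra. }
  assert (Hpw : (1 + R0)^(N+2) <= exp (INR (N + 2) * R0)) by (apply pow1r_le_exp; auto).
  assert (Ht3 : R0^3 - 2 * L * R0 <= (sqrt sg)^3).
  { apply t3_bound; auto. apply sqrt_pos.
    destruct (Rle_dec 0 sg).
    - replace (sqrt sg ^ 2) with sg by (rewrite <- Rsqr_pow2, Rsqr_sqrt; auto). unfold sg, L in *. pose proof (Rabs_maj2 a). nra.
    - rewrite sqrt_neg_0 by lra. unfold sg, L in *. pose proof (Rabs_maj2 a). nra. }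
  assert (HF : E2 * ((1 + R0)^(N+2) * EE sg) <= exp T1 * exp (- (2 * rho / 3) * R0 ^ 3)).
  { apply Rle_trans with (exp (2 * x * y * z) * (exp (INR (N + 2) * R0) * exp (- (2/3) * (sqrt sg)^3))).
    { apply Rmult_le_compat_l. left; apply exp_pos. apply Rmult_le_compat_r. left; apply exp_pos. exact Hpw. }
    rewrite <- !exp_plus. apply exp_le.
    specialize (HT1 R0 HR0).
    assert (- (2/3) * sqrt sg ^ 3 <= - (2/3) * (R0^3 - 2 * L * R0)) by lra.
    nra. }
  assert (Hfin : E2 * (K0 * (1 + R0) ^ (N + 2) * EE sg) <= K0 * exp T1 * exp (- (2 * rho / 3) * R0 ^ 3)).
  { replace (E2 * (K0 * (1 + R0) ^ (N + 2) * EE sg)) with (K0 * (E2 * ((1 + R0)^(N+2) * EE sg))) by ring.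
    rewrite Rmult_assoc. apply Rmult_le_compat_l; auto. }
  pose proof (exp_pos (- (2 * rho / 3) * R0 ^ 3)). lra.
Qed.
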